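(* For any $n$-node graph $G$ and any $r\in\mathbb{N}$, the existence of an $r$-cycle in $G$ can be detected within $\lfloor (r-1)/2\rfloor+\mathcal{O}(\log n/\log\log n)$ rounds of the $\mathsf{HYBRID}$ model.
   Context: Distributed setting: $n$ nodes with unique IDs in $\{1,\dots,n\}$; local communication graph $G$ undirected; each node initially knows only its neighbors' IDs; synchronous rounds, unlimited local computation. In the $\mathsf{HYBRID}$ model, in every round each node may send a message of arbitrary size to each neighbor (local mode) and may additionally send and receive $\mathcal{O}(\log n)$-bit messages to/from up to $\mathcal{O}(\log n)$ arbitrary nodes (global mode); excess messages are dropped arbitrarily. An $r$-cycle is a cycle of length $r$; detection means every node learns whether $G$ contains an $r$-cycle. *)

(* Defs.v *)
From mathcomp Require Import all_boot.
Set Warnings "-notation-overridden".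
Set Implicit Arguments. Unset Strict Implicit. Unset Printing Implicit Defensive.

(* Nodes are 'I_n; node v has ID v+1 (so IDs are exactly {1..n}).
   A graph is a symmetric irreflexive relation adj on 'I_n. *)

Definition has_rcycle (n : nat) (adj : rel 'I_n) (r : nat) : Prop :=
  3 <= r /\ exists s : seq 'I_n, [/\ size s = r, uniq s & cycle adj s].

Record hybrid_alg (n : nat) := HybridAlg {
  hstate : Type;
  hlmsg : Type;                                   (* local messages: arbitrary size *)
  hinit : 'I_n -> {set 'I_n} -> hstate;           (* own ID, neighbours' IDs *)
  hlsend : hstate -> 'I_n -> hlmsg;
  hgsend : hstate -> seq ('I_n * seq bool);       (* global messages: (target, bits) *)
  hstep : hstate -> ('I_n -> option hlmsg) -> seq ('I_n * seq bool) -> hstate;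
  hout : hstate -> bool }.

(* global capacity lambda = c0 * (floor(log2 n) + 1): both the max number of
   bits of a global message and the max number of global messages a node may
   send / receive per round. *)
Definition hcap (n c0 : nat) : nat := c0 * (trunc_log 2 n).+1.

(* Global messages addressed to v in a round (sender ID attached); a node's
   messages beyond the first lam and bits beyond the first lam are dropped. *)
Definition global_pool n (A : hybrid_alg n) (lam : nat) (st : 'I_n -> hstate A)
    (v : 'I_n) : seq ('I_n * seq bool) :=
  flatten [seq [seq (u, take lam p.2) | p <- filter (fun p => p.1 == v)
                                                    (take lam (hgsend (st u)))]
          | u <- enum 'I_n].

(* The delivered global messages: an arbitrary sub-multiset (in arbitrary
   order) of the pool of size min(lam, |pool|): excess dropped arbitrarily. *)
Definition delivery_ok n (lam : nat) (pool D : seq ('I_n * seq bool)) : Prop :=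
  (exists m : bitseq, perm_eq D (mask m pool)) /\ size D = minn lam (size pool).

Definition local_in n (A : hybrid_alg n) (adj : rel 'I_n) (st : 'I_n -> hstate A)
    (v : 'I_n) : 'I_n -> option (hlmsg A) :=
  fun u => if adj u v then Some (hlsend (st u) v) else None.

Definition hybrid_round n (A : hybrid_alg n) (adj : rel 'I_n) (lam : nat)
    (st st' : 'I_n -> hstate A) : Prop :=
  forall v, exists D, delivery_ok lam (global_pool lam st v) D /\
    st' v = hstep (st v) (local_in adj st v) D.

Definition hybrid_exec n (A : hybrid_alg n) (adj : rel 'I_n) (lam T : nat)
    (ex : nat -> 'I_n -> hstate A) : Prop :=
  (forall v, ex 0 v = hinit A v [set u | adj v u]) /\
  (forall t, t < T -> hybrid_round adj lam (ex t) (ex t.+1)).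

(* After T rounds, in every execution (every adversarial dropping), every node
   outputs whether G contains an r-cycle. *)
Definition detects_within n (A : hybrid_alg n) (adj : rel 'I_n) (lam r T : nat)
    : Prop :=
  forall ex : nat -> 'I_n -> hstate A, hybrid_exec adj lam T ex ->
    forall v, hout (ex T v) <-> has_rcycle adj r.

(* Main.v *)
Require Import Defs.
From mathcomp Require Import all_boot zify.
Set Implicit Arguments. Unset Strict Implicit. Unset Printing Implicit Defensive.

Record hst (n : nat) := HSt { hid : 'I_n; hrnd : nat; hK : {set 'I_n * 'I_n}; hinf : bool }.

Definition krel n (K : {set 'I_n * 'I_n}) : rel 'I_n :=
  fun a b => ((a,b) \in K) || ((b,a) \in K).
Definition det n r (K : {set 'I_n * 'I_n}) : bool :=
  (2 < r) && [exists s : r.-tuple 'I_n, uniq s && cycle (krel K) s].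

Definition DD n := trunc_log 2 n %/ trunc_log 2 (trunc_log 2 n) + 2.
Definition t0 r := (r.-1)./2.

Definition gsend n r c0 (st : hst n) : seq ('I_n * seq bool) :=
  if hinf st then
    (if hrnd st < t0 r + DD n then [:: (insubd (hid st) (hid st %/ hcap n c0), [::])]
     else [seq (insubd (hid st) (hid st * hcap n c0 + j), [::]) | j <- iota 0 (hcap n c0)])
  else [::].

Definition stepf n r (st : hst n) (M : 'I_n -> option {set 'I_n * 'I_n})
   (D : seq ('I_n * seq bool)) : hst n :=
  let K' := hK st :|: \bigcup_(u : 'I_n) odflt set0 (M u) in
  HSt (hid st) (hrnd st).+1 K' [|| hinf st, det r K' | D != [::]].

Definition K0 n (v : 'I_n) (N : {set 'I_n}) : {set 'I_n * 'I_n} :=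
  [set p | (p.1 == v) && (p.2 \in N)].

Definition alg n r c0 : hybrid_alg n :=
  @HybridAlg n (hst n) {set 'I_n * 'I_n}
    (fun v N => HSt v 0 (K0 v N) (det r (K0 v N)))
    (fun st _ => hK st)
    (gsend r c0)
    (@stepf n r)
    (@hinf n).

Fixpoint near n (adj : rel 'I_n) (t : nat) (v a : 'I_n) : bool :=
  if t is t'.+1 then near adj t' v a || [exists u, adj u v && near adj t' u a]
  else a == v.

Lemma near_mono n (adj : rel 'I_n) t k v a : near adj t v a -> near adj (t + k) v a.
Proof. elim: k => [|k IH]; first by rewrite addn0. by rewrite addnS /= => /IH ->. Qed.

Lemma near_refl n (adj : rel 'I_n) t v : near adj t v v.
Proof. by rewrite -[t]add0n; apply: (@near_mono n adj 0 t v v); rewrite /= eqxx. Qed.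

Lemma near_step n (adj : rel 'I_n) t u v a : adj u v -> near adj t u a -> near adj t.+1 v a.
Proof. by move=> huv hn /=; apply/orP; right; apply/existsP; exists u; rewrite huv. Qed.

Lemma near_path n (adj : rel 'I_n) : symmetric adj -> forall p x t,
  path adj x p -> size p <= t.+1 -> path [rel a b | near adj t x a && adj a b] x p.
Proof.
move=> sym; elim=> [//|y p IH] x t /= /andP[hxy hp] hs.
rewrite near_refl hxy /=.
case: p IH hp hs => [//|z p] IH hp hs.
case: t hs => [//|t] hs.
apply: sub_path (IH y t hp hs) => a b /= /andP[hn ->]; rewrite andbT.
by apply: near_step hn; rewrite sym.
Qed.

Definition crel n (adj : rel 'I_n) t w : rel 'I_n :=
  fun a b => (near adj t w a && adj a b) || (near adj t w b && adj b a).

Lemma near_cycle n (adj : rel 'I_n) r : symmetric adj -> forall w q,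
  cycle adj (w :: q) -> size (w :: q) = r ->
  cycle (crel adj (r.-1)./2 w) (w :: q).
Proof.
move=> sym w q /= hc hs.
set t := (r.-1)./2.
rewrite -(cat_take_drop t.+1 (rcons q w)) cat_path.
rewrite -(cat_take_drop t.+1 (rcons q w)) cat_path in hc.
case/andP: hc => h1 h2; apply/andP; split.
  apply: sub_path (@near_path n adj sym _ w t h1 _); first by move=> a b /= h; rewrite /crel h.
  rewrite size_take; case: ifP => // /negbT; rewrite -leqNgt; lia.
set y := last w _ in h2 *.
set p2 := drop _ _ in h2 *.
have hl : last y p2 = w.
  by rewrite /y /p2 -last_cat cat_take_drop last_rcons.
have h2' : path (fun z => adj^~ z) y p2.
  by apply: sub_path h2 => a b; rewrite sym.
rewrite -rev_path hl in h2'.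
have hsz : size (rev (belast y p2)) <= t.+1.
  rewrite size_rev size_belast /p2 size_drop size_rcons.
  move: hs => /= hs; rewrite /t -hs; lia.
have := near_path sym h2' hsz.
rewrite -hl rev_path hl => h3.
by apply: sub_path h3 => a b /= h; rewrite /crel h orbT.
Qed.


Lemma cap_bound n c0 : 0 < c0 -> n <= hcap n c0 ^ DD n.
Proof.
move=> c0p; rewrite /hcap /DD.
set L := trunc_log 2 n; set LL := trunc_log 2 L.
have hn : n < 2 ^ L.+1 by apply: trunc_log_ltn.
have hL : L.+1 <= c0 * L.+1 by rewrite leq_pmull.
have [L0|Lp] := posnP L.
  have : n <= 1 by move: hn; rewrite L0.
  move=> h; apply: (leq_trans h); rewrite expn_gt0; lia.
have [LL0|LLp] := posnP LL.
  have L1 : L = 1.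
    have : L < 2 ^ LL.+1 by apply: trunc_log_ltn.
    rewrite LL0; lia.
  rewrite LL0 divn0 add0n; apply: (leq_trans (ltnW hn)).
  rewrite L1 in hL *; rewrite leq_exp2r // ?addn2 //; lia.
apply: (leq_trans (ltnW hn)).
have h2 : 2 ^ LL <= L by apply: trunc_logP.
apply: (@leq_trans ((2 ^ LL) ^ (L %/ LL + 2))).
  rewrite -expnM leq_exp2l //.
  have := divn_eq L LL; have := ltn_pmod L LLp; nia.
rewrite leq_exp2r ?addn2 //; lia.
Qed.

Section Exec.
Variables (n r c0 : nat) (adj : rel 'I_n) (T : nat).
Hypothesis c0p : 0 < c0.
Hypothesis sym : symmetric adj.
Variable ex : nat -> 'I_n -> hstate (alg n r c0).
Hypothesis hex : hybrid_exec adj (hcap n c0) T ex.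

Local Notation lam := (hcap n c0).

Lemma lam_gt0 : 0 < lam.
Proof. by rewrite /hcap muln_gt0 c0p. Qed.

Lemma ex_step t v : t < T -> exists D,
  delivery_ok lam (global_pool lam (ex t) v) D /\
  ex t.+1 v = stepf r (ex t v) (local_in adj (ex t) v) D.
Proof. by move=> ht; case: hex => _ /(_ t ht v). Qed.

Lemma ex_basic t : t <= T -> forall v, [/\ hid (ex t v) = v, hrnd (ex t v) = t &
  forall a b, ((a,b) \in hK (ex t v)) = near adj t v a && adj a b].
Proof.
elim: t => [|t IH] ht v.
  case: hex => -> _; split => // a b /=.
  rewrite /K0 inE /=; case: eqP => [->|] //=; by rewrite inE.
have [D [_ ->]] := ex_step v ht.
have IH' := IH (ltnW ht).
case: (IH' v) => h1 h2 h3; split => //=; first by rewrite h2.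
move=> a b; rewrite in_setU h3 andb_orl; congr (_ || _).
apply/bigcupP/idP.
  move=> [u _]; rewrite /local_in; case: ifP => huv /= hab; last by rewrite inE in hab.
  case: (IH' u) => _ _ h; rewrite h in hab; case/andP: hab => hn ->; rewrite andbT.
  by apply/existsP; exists u; rewrite huv.
case/andP => /existsP [u /andP [huv hn]] hab; exists u => //.
rewrite /local_in huv /=; case: (IH' u) => _ _ ->; by rewrite hn.
Qed.

Lemma det_sound (K : {set 'I_n * 'I_n}) : (forall a b, (a,b) \in K -> adj a b) -> det r K -> has_rcycle adj r.
Proof.
move=> hK /andP [hr /existsP [s /andP [hu hc]]]; split => //.
exists (val s); split => //; first by rewrite size_tuple.
apply: sub_cycle hc => a b /orP [/hK // | /hK]; by rewrite sym.
Qed.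

Lemma inf_sound t : t <= T -> forall v, hinf (ex t v) -> has_rcycle adj r.
Proof.
elim: t => [|t IH] ht v.
  case: hex => -> _ /=; apply: det_sound => a b; rewrite inE /= => /andP [/eqP -> ].
  by rewrite inE.
have [D [[_ hsz] he]] := ex_step v ht.
have [_ _ hK1] := ex_basic ht v.
rewrite he /= in hK1 *.
move=> /orP [/(IH (ltnW ht)) //|/orP [hd | hD]].
  apply: det_sound hd => a b.
  by rewrite hK1 => /andP [].
have : global_pool lam (ex t) v != [::].
  by apply: contraNneq hD => hp; rewrite -size_eq0 hsz hp minn0.
case E: (global_pool lam (ex t) v) => [//|x s] _.
have : x \in global_pool lam (ex t) v by rewrite E mem_head.
rewrite /global_pool => /flattenP [s' /mapP [u _ ->]] /mapP [p hp _].
move: hp; rewrite mem_filter => /andP [_ /mem_take].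
rewrite /= /gsend; case: ifP => // hi _.
exact: (IH (ltnW ht) u hi).
Qed.

Lemma inf_mono t v : t < T -> hinf (ex t v) -> hinf (ex t.+1 v).
Proof. by move=> ht hi; have [D [_ ->]] := ex_step v ht; rewrite /= hi. Qed.

Lemma inf_mono_le t t' v : t <= t' -> t' <= T -> hinf (ex t v) -> hinf (ex t' v).
Proof.
move=> htt'; elim: t' htt' => [|t' IH]; first by rewrite leqn0 => /eqP ->.
rewrite leq_eqVlt => /orP [/eqP <- //| h1] h2 hi.
by apply: inf_mono => //; apply: IH => //; apply: ltnW.
Qed.

Lemma det_inf t v : t <= T -> det r (hK (ex t v)) -> hinf (ex t v).
Proof.
case: t => [|t] ht.
  by case: hex => -> _.
have [D [_ he]] := ex_step v ht; by rewrite he /= => ->; rewrite orbT.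
Qed.

Lemma inf_recv t u v bits : t < T -> hinf (ex t u) ->
  (v, bits) \in hgsend (ex t u) -> size (hgsend (ex t u)) <= lam ->
  hinf (ex t.+1 v).
Proof.
move=> ht hi hm hs.
have [D [[_ hsz] he]] := ex_step v ht.
have hp : (u, take lam bits) \in global_pool lam (ex t) v.
  apply/flattenP; eexists; first by apply: map_f; rewrite mem_enum.
  apply/mapP; exists (v, bits) => //.
  by rewrite mem_filter eqxx /= take_oversize.
have hD : D != [::].
  rewrite -size_eq0 hsz; case E: (global_pool lam (ex t) v) hp => [//|y q] _.
  have := lam_gt0; rewrite /=; lia.
by rewrite he /= hD !orbT.
Qed.

Lemma up j w : t0 r + j <= T -> j <= DD n -> hinf (ex (t0 r) w) ->
  forall x : 'I_n, val x = w %/ lam ^ j -> hinf (ex (t0 r + j) x).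
Proof.
elim: j => [|j IH] hj hjD hw x hx.
  by rewrite addn0; have -> : x = w by apply: val_inj; rewrite hx expn0 divn1.
have hyn : w %/ lam ^ j < n by apply: leq_ltn_trans (leq_div _ _) (ltn_ord w).
set y : 'I_n := Ordinal hyn.
have hT : t0 r + j < T by rewrite addnS in hj.
have hy := IH (ltnW hT) (ltnW hjD) hw y erefl.
have [hid1 hrnd1 _] := ex_basic (ltnW hT) y.
have hg : hgsend (ex (t0 r + j) y) = [:: (x, [::])].
  rewrite /= /gsend hy hrnd1 hid1 ltn_add2l hjD; congr [:: (_, _)].
  apply: val_inj; rewrite val_insubd /= -divnMA -expnSr -hx ltn_ord //.
rewrite addnS; apply: (inf_recv (bits := [::]) hT hy).
  by rewrite hg mem_head.
by rewrite hg lam_gt0.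
Qed.

Lemma down j : t0 r + DD n + j <= T ->
  (forall x : 'I_n, val x = 0 -> hinf (ex (t0 r + DD n) x)) ->
  forall x : 'I_n, val x < lam ^ j -> hinf (ex (t0 r + DD n + j) x).
Proof.
elim: j => [|j IH] hj h0 x hx.
  by rewrite addn0; apply: h0; move: hx; rewrite expn0; case: (val x).
have hyn : x %/ lam < n by apply: leq_ltn_trans (leq_div _ _) (ltn_ord x).
set y : 'I_n := Ordinal hyn.
have hT : t0 r + DD n + j < T by rewrite addnS in hj.
have hyl : val y < lam ^ j by rewrite /= ltn_divLR ?lam_gt0 // -expnSr.
have hy := IH (ltnW hT) h0 y hyl.
have [hid1 hrnd1 _] := ex_basic (ltnW hT) y.
have hg : hgsend (ex (t0 r + DD n + j) y) =
   [seq (insubd y (y * lam + i), [::]) | i <- iota 0 lam].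
  by rewrite /= /gsend hy hrnd1 hid1 ltnNge leq_addr.
rewrite addnS; apply: (inf_recv (bits := [::]) hT hy); rewrite hg.
  apply/mapP; exists (x %% lam); first by rewrite mem_iota add0n ltn_pmod ?lam_gt0.
  congr (_, _); apply: val_inj; rewrite val_insubd /= -divn_eq ltn_ord //.
by rewrite size_map size_iota.
Qed.
End Exec.


Theorem proposition35 :
  forall c0 : nat, 0 < c0 ->
  exists C : nat, forall n r : nat, exists A : hybrid_alg n,
    forall adj : rel 'I_n, symmetric adj -> irreflexive adj ->
      detects_within A adj (hcap n c0) r
        ((r.-1)./2 + C * (trunc_log 2 n %/ trunc_log 2 (trunc_log 2 n)) + C).
Proof.
move=> c0 c0p; exists 4 => n r; exists (alg n r c0) => adj sym _ ex hexec v.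
set T := _ + _ + 4.
have hDT : t0 r + DD n + DD n <= T.
  rewrite /T /DD /t0; move: (_ %/ _) ((r.-1)./2) => a b; lia.
split.
  move=> h; apply: (inf_sound sym hexec (leqnn T) h).
case=> hr [[|w q] [hs hu hcyc]]; first by rewrite -hs in hr.
have hcr := near_cycle sym hcyc hs.
have hT0 : t0 r <= T by apply: leq_trans hDT; rewrite -addnA leq_addr.
have [_ _ hK1] := ex_basic hexec hT0 w.
have hdet : det r (hK (ex (t0 r) w)).
  rewrite /det hr /=; have hs' : size (w :: q) == r by rewrite hs.
  apply/existsP; exists (Tuple hs'); apply/andP; split; first exact: hu.
  by apply: sub_cycle hcr => a b; rewrite /krel !hK1.
have hw := det_inf hexec hT0 hdet.
have hcap := cap_bound n c0p.
have h0 : forall x : 'I_n, val x = 0 -> hinf (ex (t0 r + DD n) x).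
  move=> x hx; apply: (up c0p hexec _ (leqnn _) hw).
    by apply: leq_trans hDT; rewrite leq_addr.
  rewrite hx divn_small //; exact: leq_trans (ltn_ord w) hcap.
have hv := down c0p hexec hDT h0 (leq_trans (ltn_ord v) hcap).
exact: (inf_mono_le hexec _ (leqnn T) hv).
Qed.
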